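(* Let $d\in\mathbb{N}$, $N=d$, $\mathcal{N}=\{1,\dots,d\}$, and consider the switched system $x(t+1)=A_{\nu(t)}x(t)+b_{\nu(t)}\mu(t)$ with state set $\mathcal{X}=\mathbb{R}^d$ and set of admissible continuous controls $\mathcal{U}=\mathbb{R}$. Suppose each $A_i$, $i\in\mathcal{N}$, is an anti-diagonal matrix with all anti-diagonal entries nonzero, and each $b_i\in\mathbb{R}^d$ has its $(d-i+1)$-th entry nonzero and all other entries zero. Define $\mathcal{X}_0=\{0_d\}$, $\mathcal{X}_j=\{x\in\mathbb{R}^d: x_j\neq0,\ x_i=0 \text{ for all } i\neq j\}$ for $j=1,\dots,d$, and $\mathcal{X}_{d+1}=\mathbb{R}^d\setminus\bigcup_{j=0}^d\mathcal{X}_j$. Then $(\mathcal{X}_j)_{j=0}^{d+1}$ is a state-space abstraction of this switched system.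
   Context: A family $(\mathcal{X}_j)_{j=0}^n$ of subsets of $\mathcal{X}$ is a state-space abstraction of the switched system with subsystems $(A_i,b_i)$, $i\in\mathcal{N}$, and admissible continuous control set $\mathcal{U}$ if: (i) $\mathcal{X}_0=\{0_d\}$; (ii) the $\mathcal{X}_j$ are pairwise disjoint; (iii) $\bigcup_{j=0}^n\mathcal{X}_j=\mathcal{X}$; (iv) for each $j\in\{1,\dots,n\}$ and $i\in\mathcal{N}$ there is $k\in\{0,\dots,n\}$ with $A_ix\in\mathcal{X}_k$ for all $x\in\mathcal{X}_j$; (v) for each $j\in\{1,\dots,n\}$ and $i\in\mathcal{N}$ there is $\ell\in\{0,\dots,n\}$ such that for every $x\in\mathcal{X}_j$, $A_ix+b_i\mu(x)\in\mathcal{X}_\ell$ for some $\mu(x)\in\mathcal{U}\setminus\{0\}$. *)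

(* Defs.v *)
From HB Require Import structures.
From mathcomp Require Import all_boot all_order all_algebra.
From mathcomp Require Import reals.
Set Implicit Arguments. Unset Strict Implicit. Unset Printing Implicit Defensive.
Import Order.TTheory GRing.Theory Num.Theory.
Local Open Scope ring_scope.

(* The family (X_j)_{j=0..n} is indexed
   by 'I_n.+1, with X_0 = X ord0. *)
Definition state_space_abstraction (R : realType) (d n : nat) (I : Type)
  (A : I -> 'M[R]_d) (b : I -> 'cV[R]_d) (U : R -> Prop)
  (Xs : 'cV[R]_d -> Prop) (X : 'I_n.+1 -> 'cV[R]_d -> Prop) : Prop :=
  (forall x, X ord0 x <-> x = 0) /\
  (forall j k : 'I_n.+1, j != k -> forall x, X j x -> X k x -> False) /\
  (forall x, Xs x <-> exists j : 'I_n.+1, X j x) /\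
  (forall j : 'I_n.+1, j != ord0 -> forall i : I,
     exists k : 'I_n.+1, forall x, X j x -> X k (A i *m x)) /\
  (forall j : 'I_n.+1, j != ord0 -> forall i : I,
     exists l : 'I_n.+1, forall x, X j x ->
       exists mu : R, U mu /\ mu <> 0 /\ X l (A i *m x + mu *: b i)).

Definition axis_set (R : realType) (d : nat) (j : 'I_d) (x : 'cV[R]_d) : Prop :=
  x j ord0 != 0 /\ forall k : 'I_d, k != j -> x k ord0 = 0.

(* The family X_0, ..., X_{d+1} of the proposition (paper index j = val). *)
Definition prop2_X (R : realType) (d : nat) (j : 'I_d.+2) (x : 'cV[R]_d) : Prop :=
  match val j with
  | 0 => x = 0
  | m.+1 => if (m < d)%N then exists k : 'I_d, val k = m /\ axis_set k x
            else ~ (x = 0 \/ exists k : 'I_d, axis_set k x)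
  end.

(* Main.v *)
Require Import Defs.
From HB Require Import structures.
From mathcomp Require Import all_boot all_order all_algebra.
From mathcomp Require Import reals.
From mathcomp Require Import zify.
From Stdlib Require Import Classical.
Set Implicit Arguments. Unset Strict Implicit.
Import Order.TTheory GRing.Theory Num.Theory.
Local Open Scope ring_scope.

Section Aux.
Variables (R : realType) (d : nat).

Lemma revE (i k : 'I_d) : (val k = d.-1 - i)%N <-> k = rev_ord i.
Proof.
split; [move=> h|move=> ->]; last by rewrite /= -subn1; have := ltn_ord i; lia.
apply: val_inj => /=; move: h; change (val k) with (nat_of_ord k); rewrite -subn1; have := ltn_ord i; have := ltn_ord k; lia.
Qed.

Lemma revE2 (r c : 'I_d) : (r + c)%N = d.-1 <-> c = rev_ord r.
Proof.
split; [move=> h|move=> ->]; last by rewrite /= -subn1; have := ltn_ord r; lia.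
apply: val_inj => /=; move: h; rewrite -subn1; have := ltn_ord r; have := ltn_ord c; lia.
Qed.

Lemma mulAx (A : 'M[R]_d) (x : 'cV[R]_d)
  (hA0 : forall (r c : 'I_d), (r + c)%N <> d.-1 -> A r c = 0) r :
  (A *m x) r ord0 = A r (rev_ord r) * x (rev_ord r) ord0.
Proof.
rewrite mxE (bigD1 (rev_ord r)) //= big1 ?addr0 // => c hc.
rewrite hA0 ?mul0r // => /revE2 e; by rewrite e eqxx in hc.
Qed.

Lemma entryz (A : 'M[R]_d) (x b : 'cV[R]_d) mu r :
  (A *m x + mu *: b) r ord0 = (A *m x) r ord0 + mu * b r ord0.
Proof. rewrite mxE; congr (_ + _); by rewrite mxE. Qed.

Definition inaxis (k : 'I_d) : 'I_d.+2 :=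
  @Ordinal d.+2 k.+1 (leq_trans (ltn_ord k) (leqnSn _)).

Lemma L0 (x : 'cV[R]_d) : prop2_X ord0 x <-> x = 0.
Proof. by []. Qed.

Lemma Laxis k (x : 'cV[R]_d) : prop2_X (inaxis k) x <-> axis_set k x.
Proof.
rewrite /prop2_X /= ltn_ord; split=> [[k' [hk ha]]|h]; last by exists k.
by have -> : k = k' by apply: val_inj.
Qed.

Lemma Lrest (x : 'cV[R]_d) : prop2_X ord_max x <->
  ~ (x = 0 \/ exists k, axis_set k x).
Proof. by rewrite /prop2_X /= ltnn. Qed.

Lemma Lcases (j : 'I_d.+2) :
  j = ord0 \/ (exists k, j = inaxis k) \/ j = ord_max.
Proof.
case: j => [[|m] hm].
  by left; apply: val_inj.
right; case: (ltnP m d) => h.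
  by left; exists (Ordinal h); apply: val_inj.
by right; apply: val_inj => /=; lia.
Qed.

Lemma restE (x : 'cV[R]_d) : ~ (x = 0 \/ exists k, axis_set k x) <->
  exists p q : 'I_d, p != q /\ x p ord0 != 0 /\ x q ord0 != 0.
Proof.
split.
  move=> h.
  have [p hp] : exists p, x p ord0 != 0.
    apply: NNPP => hn; apply: h; left; apply/matrixP => r s.
    rewrite (ord1 s) mxE; apply/eqP; apply: NNPP => hr; apply: hn; by exists r; apply/negP.
  have [q hq] : exists q, q != p /\ x q ord0 != 0.
    apply: NNPP => hn; apply: h; right; exists p; split=> // k hk.
    apply/eqP; apply: NNPP => hr; apply: hn; by exists k; split=> //; apply/negP.
  by exists p, q; case: hq => h1 h2; rewrite eq_sym h1.
move=> [p [q [hpq [hp hq]]]] [h|[k [hk ha]]].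
  by move: hp; rewrite h mxE eqxx.
case: (eqVneq p k) => [e|ne].
  by move: hq; rewrite ha ?eqxx // -e eq_sym.
by move: hp; rewrite ha ?eqxx.
Qed.

End Aux.

Theorem proposition2 (R : realType) (d : nat)
  (A : 'I_d -> 'M[R]_d) (b : 'I_d -> 'cV[R]_d)
  (hA0 : forall (i : 'I_d) (r c : 'I_d), (r + c)%N <> d.-1 -> A i r c = 0)
  (hA1 : forall (i : 'I_d) (r c : 'I_d), (r + c)%N = d.-1 -> A i r c != 0)
  (hb0 : forall (i k : 'I_d), (val k <> d.-1 - i)%N -> b i k ord0 = 0)
  (hb1 : forall (i k : 'I_d), (val k = d.-1 - i)%N -> b i k ord0 != 0) :
  state_space_abstraction A b (fun _ : R => True) (fun _ : 'cV[R]_d => True)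
    (@prop2_X R d).
Proof.
have hAx i (x : 'cV[R]_d) r : (A i *m x) r ord0 = A i r (rev_ord r) * x (rev_ord r) ord0.
  by apply: (@mulAx R d (A i) x (hA0 i)).
have hAn i r : A i r (rev_ord r) != 0 by apply: hA1; apply/revE2.
have hbn i : b i (rev_ord i) ord0 != 0 by apply: hb1; apply/revE.
have hbz i k : k != rev_ord i -> b i k ord0 = 0.
  by move=> hk; apply: hb0 => /revE e; rewrite e eqxx in hk.
have Aaxis i m (x : 'cV[R]_d) : axis_set m x -> axis_set (rev_ord m) (A i *m x).
  move=> [hm hz]; split; first by rewrite hAx; apply: mulf_neq0; [exact: hAn | rewrite rev_ordK].
  move=> k hk; rewrite hAx hz ?mulr0 //; apply: contraNneq hk => e.
  by rewrite -e rev_ordK.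
have Arest i (x : 'cV[R]_d) : (exists p q : 'I_d, p != q /\ x p ord0 != 0 /\ x q ord0 != 0) ->
   exists p q : 'I_d, p != q /\ (A i *m x) p ord0 != 0 /\ (A i *m x) q ord0 != 0.
  move=> [p [q [hpq [hp hq]]]]; exists (rev_ord p), (rev_ord q); split.
    by apply: contra hpq => /eqP e; apply/eqP; apply: rev_ord_inj.
  by split; rewrite hAx; apply: mulf_neq0; [exact: hAn | rewrite rev_ordK | exact: hAn | rewrite rev_ordK].
split; first by move=> x; apply: L0.
split.
  move=> j k + x; case: (Lcases j) => [->|[[j' ->]|->]];
  case: (Lcases k) => [->|[[k' ->]|->]]; rewrite ?L0 ?Laxis ?Lrest => hjk;
  try by rewrite eqxx in hjk.
  - by move=> e [h _]; move: h; rewrite e mxE eqxx.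
  - by move=> e []; left.
  - by move=> [h _] e; move: h; rewrite e mxE eqxx.
  - move=> [h1 h2] [h3 h4]; have ne : j' != k'.
      by apply: contra hjk => /eqP ->.
    by move: h1; rewrite h4 ?eqxx.
  - by move=> h []; right; exists j'.
  - by move=> h e; apply: h; left.
  - by move=> h e; apply: h; right; exists k'.
split.
  move=> x; split=> // _.
  case: (classic (x = 0 \/ exists k, axis_set k x)) => [[->|[k hk]]|h].
  - by exists ord0.
  - by exists (inaxis k); apply/Laxis.
  - by exists ord_max; apply/Lrest.
split.
  move=> j hj i; case: (Lcases j) => [e|[[m ->]|->]].
  - by rewrite e eqxx in hj.
  - by exists (inaxis (rev_ord m)) => x /Laxis h; apply/Laxis; apply: Aaxis.
  - by exists ord_max => x /Lrest/restE h; apply/Lrest/restE; apply: Arest.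
move=> j hj i; case: (Lcases j) => [e|[[m ->]|->]].
- by rewrite e eqxx in hj.
- case: (eqVneq m i) => [<-|nmi].
    exists ord0 => x /Laxis hx; have [hx1 hx2] := Aaxis m m x hx.
    set c := rev_ord m in hx1 hx2 *.
    exists (- ((A m *m x) c ord0 / b m c ord0)); split=> //; split.
      by apply/eqP; rewrite oppr_eq0 mulf_neq0 // invr_eq0.
    apply/L0/matrixP => r s; rewrite (ord1 s) entryz [RHS]mxE.
    case: (eqVneq r c) => [->|nrc].
      by rewrite mulNr divfK ?subrr.
    by rewrite hx2 // (hbz _ _ nrc) mulr0 addr0.
  exists ord_max => x /Laxis hx; have [hx1 hx2] := Aaxis i m x hx.
  exists 1; split=> //; split; first by apply/eqP; rewrite oner_eq0.
  have nr : rev_ord m != rev_ord i.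
    by apply: contra nmi => /eqP e; apply/eqP; apply: rev_ord_inj.
  apply/Lrest/restE; exists (rev_ord m), (rev_ord i); split; first exact: nr.
  rewrite !entryz !mul1r (hbz _ _ nr) addr0 (hx2 (rev_ord i)) ?add0r; last by rewrite eq_sym.
  by split=> //; exact: hbn.
- exists ord_max => x /Lrest/restE/(Arest i) [p [q [hpq [hp hq]]]].
  set c := rev_ord i.
  set y := (A i *m x) c ord0.
  exists (if y + b i c ord0 == 0 then 2 else 1); split=> //; split.
    by case: ifP => _; apply/eqP; rewrite ?pnatr_eq0 ?oner_eq0.
  have hzc : (A i *m x + (if y + b i c ord0 == 0 then 2 else 1) *: b i) c ord0 != 0.
    rewrite entryz -/y; case: ifPn => [/eqP h|h]; last by rewrite mul1r.
    have -> : y = - b i c ord0 by apply/eqP; rewrite -addr_eq0 h.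
    by rewrite mulr2n mulrDl mul1r addKr hbn.
  have hzk k : k != c -> (A i *m x + (if y + b i c ord0 == 0 then 2 else 1) *: b i) k ord0 = (A i *m x) k ord0.
    by move=> hk; rewrite entryz (hbz _ _ hk) mulr0 addr0.
  apply/Lrest/restE.
  case: (eqVneq p c) => [epc|npc].
    exists q, c; split; first by rewrite -epc eq_sym.
    by rewrite hzk ?hq // -epc eq_sym.
  by exists p, c; rewrite npc hzk.
Qed.
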